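(* Let $M$ be a $2^n\times2^n$ Hermitian matrix, let $k\le n$, and let $\varphi$ be a $2^k\times2^k$ density operator. Let $M_\varphi=\mathrm{Tr}_{n-k+1,\dots,n}\big[(I\otimes\varphi)M\big]$. Then for every $\varepsilon\in[0,1]$, $\deg_\varepsilon(M_\varphi)\le\deg_\varepsilon(M)$.
   Context: Pauli degree: with $P_\sigma=\bigotimes_iP_{\sigma_i}$, $P_0=I,P_1=X,P_2=Y,P_3=Z$, every $2^m\times2^m$ matrix is $A=\sum_\sigma\hat A(\sigma)P_\sigma$, $\deg(A)=\max\{|\{i:\sigma_i\ne0\}|:\hat A(\sigma)\ne0\}$, and $\deg_\varepsilon(A)=\min\{\deg(B):\|A-B\|\le\varepsilon\}$ with $\|\cdot\|$ the spectral norm. $\mathrm{Tr}_{n-k+1,\dots,n}$ is the partial trace over the last $k$ qubits. *)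

(* Defs.v *)
From HB Require Import structures.
From mathcomp Require Import all_boot all_order all_algebra.
From mathcomp Require Import complex.
From mathcomp Require Import boolp classical_sets reals.
Set Implicit Arguments. Unset Strict Implicit. Unset Printing Implicit Defensive.
Import Order.TTheory GRing.Theory Num.Theory.
Local Open Scope ring_scope.

Lemma hi_proof p q (x : 'I_(p * q)) : (x %/ q < p)%N.
Proof.
have := ltn_ord x; move: (nat_of_ord x) => y; clear x.
case: q => [|q]; first by rewrite muln0.
by move=> h; rewrite ltn_divLR.
Qed.
Lemma lo_proof p q (x : 'I_(p * q)) : (x %% q < q)%N.
Proof.
have := ltn_ord x; move: (nat_of_ord x) => y; clear x.
case: q => [|q]; first by rewrite muln0.
by rewrite ltn_mod.
Qed.
Lemma pair_proof p q (i : 'I_p) (l : 'I_q) : (i * q + l < p * q)%N.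
Proof.
have := ltn_ord i; have := ltn_ord l => hl hi.
apply: (@leq_trans (i * q + q)); first by rewrite ltn_add2l.
by rewrite addnC -mulSn leq_mul2r hi orbT.
Qed.
(* x : 'I_(p*q) corresponds to the pair (hi x, lo x), x = hi x * q + lo x *)
Definition hi p q (x : 'I_(p * q)) : 'I_p := Ordinal (hi_proof x).
Definition lo p q (x : 'I_(p * q)) : 'I_q := Ordinal (lo_proof x).
Definition pair_ix p q (i : 'I_p) (l : 'I_q) : 'I_(p * q) := Ordinal (pair_proof i l).

Section Defs.
Variable R : realType.
Local Notation C := R[i].

(* Kronecker (tensor) product A (x) B, first factor = most significant *)
Definition kron p1 q1 p2 q2 (A : 'M[C]_(p1, q1)) (B : 'M[C]_(p2, q2))
  : 'M[C]_(p1 * p2, q1 * q2) :=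
  \matrix_(i, j) (A (hi i) (hi j) * B (lo i) (lo j)).

(* A (x) B, with A acting on the first a qubits and B on the last k qubits *)
Definition kron_q a k (A : 'M[C]_(2 ^ a)) (B : 'M[C]_(2 ^ k)) : 'M[C]_(2 ^ (a + k)) :=
  castmx (esym (expnD 2 a k), esym (expnD 2 a k)) (kron A B).

(* partial trace Tr_{a+1,...,a+k} over the last k qubits *)
Definition ptrace_last a k (X : 'M[C]_(2 ^ (a + k))) : 'M[C]_(2 ^ a) :=
  let Y : 'M[C]_(2 ^ a * 2 ^ k) := castmx (expnD 2 a k, expnD 2 a k) X in
  \matrix_(i, j) \sum_(l < 2 ^ k) Y (pair_ix i l) (pair_ix j l).

Definition ctrans p q (A : 'M[C]_(p, q)) : 'M[C]_(q, p) := (map_mx Num.conj A)^T.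
Definition is_hermitian p (A : 'M[C]_p) := ctrans A = A.
Definition psd p (A : 'M[C]_p) :=
  is_hermitian A /\ forall v : 'cV[C]_p, 0 <= (ctrans v *m A *m v) 0 0.
Definition density p (A : 'M[C]_p) := psd A /\ \tr A = 1.

Definition vnorm p (v : 'cV[C]_p) : R :=
  Num.sqrt (\sum_(i < p) Normc.normc (v i 0) ^+ 2).
Definition specnorm p q (A : 'M[C]_(p, q)) : R :=
  sup [set vnorm (A *m v) | v in [set v : 'cV[C]_q | vnorm v = 1]].

Definition pauli (s : 'I_4) : 'M[C]_2 :=
  \matrix_(r < 2, c < 2)
    match val s with
    | 0%N => if r == c then 1 else 0
    | 1%N => if r == c then 0 else 1
    | 2%N => if r == c then 0 else
             if val r == 0%N then - (Complex 0 1) else Complex 0 1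
    | _ => if r == c then (if val r == 0%N then 1 else -1) else 0
    end.

(* Pauli string P_sigma = P_{sigma_1} (x) ... (x) P_{sigma_m}, qubit 1 first
   (most significant tensor factor) *)
Fixpoint pstring (s : seq 'I_4) : 'M[C]_(2 ^ size s) :=
  match s with
  | [::] => 1%:M
  | x :: s' => castmx (esym (expnS 2 (size s')), esym (expnS 2 (size s')))
                      (kron (pauli x) (pstring s'))
  end.

Definition pauli_str m (sigma : m.-tuple 'I_4) : 'M[C]_(2 ^ m) :=
  castmx (congr1 (expn 2) (size_tuple sigma), congr1 (expn 2) (size_tuple sigma))
         (pstring sigma).

(* Pauli coefficient \hat A(sigma) = Tr(P_sigma A) / 2^m; the unique
   coefficient in A = \sum_sigma \hat A(sigma) P_sigma *)
Definition pcoef m (A : 'M[C]_(2 ^ m)) (sigma : m.-tuple 'I_4) : C :=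
  \tr (pauli_str sigma *m A) / (2 ^ m)%:R.

Definition pweight m (sigma : m.-tuple 'I_4) : nat :=
  count (fun x => x != ord0) sigma.

Definition pdeg m (A : 'M[C]_(2 ^ m)) : nat :=
  \max_(sigma : m.-tuple 'I_4 | pcoef A sigma != 0) pweight sigma.

(* approximate Pauli degree deg_eps(A) = min { deg B : ||A - B|| <= eps }
   (the set is nonempty whenever eps >= 0; default 0 otherwise) *)
Definition deg_feasible m (A : 'M[C]_(2 ^ m)) (eps : R) (d : nat) : bool :=
  `[< exists B : 'M[C]_(2 ^ m), pdeg B = d /\ specnorm (A - B) <= eps >].

Definition approx_deg m (A : 'M[C]_(2 ^ m)) (eps : R) : nat :=
  match pselect (exists d, deg_feasible A eps d) with
  | left h => ex_minn h
  | right _ => 0%N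
  end.

End Defs.

(* Main.v *)
Require Import Defs.
From HB Require Import structures.
From mathcomp Require Import all_boot all_order all_algebra.
From mathcomp Require Import complex.
From mathcomp Require Import boolp classical_sets reals spectral.
From mathcomp Require Import ring lra.
Set Implicit Arguments. Unset Strict Implicit. Unset Printing Implicit Defensive.
Import Order.TTheory GRing.Theory Num.Theory.
Local Open Scope ring_scope.

Section Work.
Variable R : realType.
Local Notation C := R[i].

Definition ent p q (A : 'M[C]_(p, q)) (i j : nat) : C :=
  match (insub i : option 'I_p), (insub j : option 'I_q) with
  | Some i', Some j' => A i' j'
  | _, _ => 0
  end.

Lemma entE p q (A : 'M[C]_(p, q)) i j (hi : (i < p)%N) (hj : (j < q)%N) :
  ent A i j = A (Ordinal hi) (Ordinal hj).
Proof. by rewrite /ent !insubT. Qed.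

Lemma ent_ord p q (A : 'M[C]_(p, q)) (i : 'I_p) (j : 'I_q) : ent A i j = A i j.
Proof. by rewrite (entE A (ltn_ord i) (ltn_ord j)); congr (A _ _); apply: val_inj. Qed.

Lemma ent0l p q (A : 'M[C]_(p, q)) i j : (p <= i)%N -> ent A i j = 0.
Proof. by move=> h; rewrite /ent insubN // -leqNgt. Qed.

Lemma ent0r p q (A : 'M[C]_(p, q)) i j : (q <= j)%N -> ent A i j = 0.
Proof. by move=> h; rewrite /ent [insub j]insubN -?leqNgt //; case: insub. Qed.

Lemma ent_inj p q (A B : 'M[C]_(p, q)) : (forall i j, ent A i j = ent B i j) -> A = B.
Proof. by move=> h; apply/matrixP => i j; rewrite -!ent_ord. Qed.

Lemma ent_cast p q p' q' (e : (p = p') * (q = q')) (A : 'M[C]_(p, q)) i j :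
  ent (castmx e A) i j = ent A i j.
Proof. by case: e => e1 e2; subst; rewrite castmx_id. Qed.

Lemma ent_kron p1 q1 p2 q2 (A : 'M[C]_(p1, q1)) (B : 'M[C]_(p2, q2)) i j :
  (0 < p2)%N -> (0 < q2)%N ->
  ent (kron A B) i j = ent A (i %/ p2) (j %/ q2) * ent B (i %% p2) (j %% q2).
Proof.
move=> p2P q2P.
have [hi|hi] := ltnP i (p1 * p2); last first.
  rewrite ent0l // ent0l ?mul0r //. by rewrite leq_divRL.
have [hj|hj] := ltnP j (q1 * q2); last first.
  rewrite ent0r // ent0r ?mul0r //. by rewrite leq_divRL.
rewrite (entE _ hi hj) mxE.
have hi1 : (i %/ p2 < p1)%N by rewrite ltn_divLR.
have hj1 : (j %/ q2 < q1)%N by rewrite ltn_divLR.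
rewrite (entE _ hi1 hj1) (entE B (ltn_pmod i p2P) (ltn_pmod j q2P)).
by congr (A _ _ * B _ _); apply: val_inj.
Qed.

Lemma ent_mul p q r (A : 'M[C]_(p, q)) (B : 'M[C]_(q, r)) i j :
  ent (A *m B) i j = \sum_(z < q) ent A i z * ent B z j.
Proof.
have [hi|hi] := ltnP i p; last by rewrite ent0l // big1 // => z _; rewrite ent0l ?mul0r.
have [hj|hj] := ltnP j r; last by rewrite ent0r // big1 // => z _; rewrite (ent0r B) ?mulr0.
rewrite (entE _ hi hj) mxE; apply: eq_bigr => z _.
by rewrite -!ent_ord.
Qed.

Lemma ent_add p q (A B : 'M[C]_(p, q)) i j : ent (A + B) i j = ent A i j + ent B i j.
Proof.
have [hi|hi] := ltnP i p; last by rewrite !ent0l ?addr0.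
have [hj|hj] := ltnP j q; last by rewrite !ent0r ?addr0.
by rewrite !(entE _ hi hj) mxE.
Qed.

Lemma ent_scale p q c (A : 'M[C]_(p, q)) i j : ent (c *: A) i j = c * ent A i j.
Proof.
have [hi|hi] := ltnP i p; last by rewrite !ent0l ?mulr0.
have [hj|hj] := ltnP j q; last by rewrite !ent0r ?mulr0.
by rewrite !(entE _ hi hj) mxE.
Qed.

Lemma ent_opp p q (A : 'M[C]_(p, q)) i j : ent (- A) i j = - ent A i j.
Proof.
have [hi|hi] := ltnP i p; last by rewrite !ent0l ?oppr0.
have [hj|hj] := ltnP j q; last by rewrite !ent0r ?oppr0.
by rewrite !(entE _ hi hj) mxE.
Qed.

Lemma ent_sum p q I (r : seq I) (P : pred I) (F : I -> 'M[C]_(p, q)) i j :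
  ent (\sum_(x <- r | P x) F x) i j = \sum_(x <- r | P x) ent (F x) i j.
Proof.
apply: (big_rec2 (fun x y => ent x i j = y)) => [|x y M _ <-]; last by rewrite ent_add.
have [hi|hi] := ltnP i p; last by rewrite !ent0l.
have [hj|hj] := ltnP j q; last by rewrite !ent0r.
by rewrite !(entE _ hi hj) mxE.
Qed.

Lemma ent_scalar n (c : C) i j : ent (c%:M : 'M[C]_n) i j = if (i < n)%N && (i == j) then c else 0.
Proof.
have [hi|hi] := ltnP i n; last by rewrite !ent0l.
have [hj|hj] := ltnP j n; last first.
  rewrite ent0r //; case: eqP => // eij; subst; by rewrite ltnNge hj in hi.
rewrite (entE _ hi hj) mxE /= -[Ordinal hi == Ordinal hj]/(i == j).
by case: (i == j).
Qed.

Lemma sum_pair p q (F : nat -> C) :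
  \sum_(z < p * q) F z = \sum_(x < p) \sum_(y < q) F (x * q + y)%N.
Proof.
elim: p => [|p IH]; first by rewrite mul0n !big_ord0.
rewrite big_ord_recr /= -IH mulSnr big_split_ord /=.
by congr (_ + _); apply: eq_bigr => y _; rewrite mulnC.
Qed.


Lemma ent_pcons x s i j : ent (pstring R (x :: s)) i j =
  ent (pauli R x) (i %/ 2 ^ size s) (j %/ 2 ^ size s) *
  ent (pstring R s) (i %% 2 ^ size s) (j %% 2 ^ size s).
Proof. by rewrite /= ent_cast ent_kron ?expn_gt0. Qed.

Lemma ent_pcat s t i j : ent (pstring R (s ++ t)) i j =
  ent (pstring R s) (i %/ 2 ^ size t) (j %/ 2 ^ size t) *
  ent (pstring R t) (i %% 2 ^ size t) (j %% 2 ^ size t).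
Proof.
elim: s i j => [|x s IH] i j.
  rewrite /= ent_scalar expn0.
  have K0 : (0 < 2 ^ size t)%N by rewrite expn_gt0.
  have [hi|hi] := ltnP i (2 ^ size t); last first.
    rewrite ent0l //.
    have -> : (i %/ 2 ^ size t < 1)%N = false by apply/negbTE; rewrite -leqNgt divn_gt0.
    by rewrite mul0r.
  have [hj|hj] := ltnP j (2 ^ size t); last first.
    rewrite ent0r // (divn_small hi).
    case: eqP => [e|]; last by rewrite andbF mul0r.
    by move: (leq_div2r (2 ^ size t) hj); rewrite divnn K0 -e.
  by rewrite (divn_small hi) (divn_small hj) (modn_small hi) (modn_small hj) mul1r.
rewrite cat_cons ent_pcons IH ent_pcons size_cat.
have e : (2 ^ (size s + size t) = 2 ^ size t * 2 ^ size s)%N by rewrite addnC expnD.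
have K0 : (0 < 2 ^ size t)%N by rewrite expn_gt0.
have dv : (2 ^ size t %| 2 ^ size t * 2 ^ size s)%N by rewrite dvdn_mulr.
rewrite e !divnMA !divn_modl // !mulKn // !modn_dvdm //.
by rewrite mulrA.
Qed.

Lemma ent_pconsK K x s i j : K = (2 ^ size s)%N -> ent (pstring R (x :: s)) i j =
  ent (pauli R x) (i %/ K) (j %/ K) * ent (pstring R s) (i %% K) (j %% K).
Proof. by move->; exact: ent_pcons. Qed.

Lemma ent_pcatK K s t i j : K = (2 ^ size t)%N -> ent (pstring R (s ++ t)) i j =
  ent (pstring R s) (i %/ K) (j %/ K) * ent (pstring R t) (i %% K) (j %% K).
Proof. by move->; exact: ent_pcat. Qed.

Lemma ent_pstr m (s : m.-tuple 'I_4) i j : ent (pauli_str R s) i j = ent (pstring R s) i j.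
Proof. by rewrite ent_cast. Qed.

Definition Kr k (E : 'M[C]_2) (Z : 'M[C]_(2 ^ k)) : 'M[C]_(2 ^ k.+1) :=
  castmx (esym (expnS 2 k), esym (expnS 2 k)) (kron E Z).

Lemma ent_Kr k E (Z : 'M[C]_(2 ^ k)) i j :
  ent (Kr E Z) i j = ent E (i %/ 2 ^ k) (j %/ 2 ^ k) * ent Z (i %% 2 ^ k) (j %% 2 ^ k).
Proof. by rewrite ent_cast ent_kron ?expn_gt0. Qed.

Lemma pauli_str_cons k x (t : k.-tuple 'I_4) :
  pauli_str R (cons_tuple x t) = Kr (pauli R x) (pauli_str R t).
Proof.
apply: ent_inj => i j; rewrite ent_Kr !ent_pstr /=.
by rewrite (ent_pconsK (K := (2 ^ k)%N)) ?size_tuple.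
Qed.

Lemma pauli_str_cat a k (s : a.-tuple 'I_4) (t : k.-tuple 'I_4) i j :
  ent (pauli_str R (cat_tuple s t)) i j =
  ent (pauli_str R s) (i %/ 2 ^ k) (j %/ 2 ^ k) *
  ent (pauli_str R t) (i %% 2 ^ k) (j %% 2 ^ k).
Proof. by rewrite !ent_pstr /= (ent_pcatK (K := (2 ^ k)%N)) ?size_tuple. Qed.

Lemma KrDl k c E E' (Z : 'M[C]_(2 ^ k)) : Kr (c *: E + E') Z = c *: Kr E Z + Kr E' Z.
Proof.
by apply: ent_inj => i j; rewrite ent_add ent_scale !ent_Kr ent_add ent_scale mulrDl mulrA.
Qed.

Lemma KrDr k c E (Z Z' : 'M[C]_(2 ^ k)) : Kr E (c *: Z + Z') = c *: Kr E Z + Kr E Z'.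
Proof.
by apply: ent_inj => i j; rewrite ent_add ent_scale !ent_Kr ent_add ent_scale mulrDr mulrCA.
Qed.

Definition islin n (g : 'M[C]_n -> C) := forall c Y Z, g (c *: Y + Z) = c * g Y + g Z.

Lemma islin0 n (g : 'M[C]_n -> C) : islin g -> g 0 = 0.
Proof.
move=> h; have := h 1 0 0; rewrite scaler0 addr0 mul1r.
by move/(congr1 (fun x => x - g 0)); rewrite subrr addrK => <-.
Qed.

Lemma islinZ n (g : 'M[C]_n -> C) c Y : islin g -> g (c *: Y) = c * g Y.
Proof. by move=> h; rewrite -[c *: Y]addr0 h islin0 // addr0. Qed.

Lemma islinD n (g : 'M[C]_n -> C) Y Z : islin g -> g (Y + Z) = g Y + g Z.
Proof. by move=> h; rewrite -[Y]scale1r h mul1r scale1r. Qed.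

Lemma islin_sum n (g : 'M[C]_n -> C) I (r : seq I) (F : I -> 'M[C]_n) :
  islin g -> g (\sum_(x <- r) F x) = \sum_(x <- r) g (F x).
Proof.
move=> h; apply: (big_rec2 (fun x y => g x = y)); first exact: islin0.
by move=> x y M _ <-; rewrite islinD.
Qed.

Lemma pauli_decomp (E : 'M[C]_2) :
  E = ((E 0 0 + E 1 1) / 2) *: pauli R 0 + (((E 0 1 + E 1 0) / 2) *: pauli R 1 +
      ((Complex 0 1 * (E 0 1 - E 1 0) / 2) *: pauli R 2 + ((E 0 0 - E 1 1) / 2) *: pauli R 3)).
Proof.
have i2 : Complex (0:R) 1 * Complex 0 1 = -1.
  by apply/eqP; rewrite eq_complex /=; simpc.
have h2 : (2 : C) != 0 by rewrite pnatr_eq0.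
apply/matrixP => r c; rewrite !mxE.
case: r => [[|[|//]] hr]; case: c => [[|[|//]] hc] /=.
- have -> : Ordinal hr = 0 by apply: val_inj. have -> : Ordinal hc = 0 by apply: val_inj.
  by field.
- have -> : Ordinal hr = 0 by apply: val_inj. have -> : Ordinal hc = 1 by apply: val_inj.
  have -> : 'i%C * (E 0 1 - E 1 0) / 2 * - 'i%C = - ('i%C * 'i%C) * ((E 0 1 - E 1 0) / 2) by ring.
  by rewrite i2 opprK mul1r; field.
- have -> : Ordinal hr = 1 by apply: val_inj. have -> : Ordinal hc = 0 by apply: val_inj.
  have -> : 'i%C * (E 0 1 - E 1 0) / 2 * 'i%C = ('i%C * 'i%C) * ((E 0 1 - E 1 0) / 2) by ring.
  by rewrite i2; field.
- have -> : Ordinal hr = 1 by apply: val_inj. have -> : Ordinal hc = 1 by apply: val_inj.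
  by field.
Qed.


Lemma KrZl k c E (Z : 'M[C]_(2 ^ k)) : Kr (c *: E) Z = c *: Kr E Z.
Proof. by apply: ent_inj => i j; rewrite ent_scale !ent_Kr ent_scale mulrA. Qed.

Lemma ent_delta p q (a : 'I_p) (b : 'I_q) i j :
  ent (delta_mx a b : 'M[C]_(p, q)) i j = ((i == a) && (j == b))%:R.
Proof.
have [hi|hi] := ltnP i p; last first.
  rewrite ent0l //; case: eqP => //= e; by move: (ltn_ord a); rewrite -e ltnNge hi.
have [hj|hj] := ltnP j q; last first.
  rewrite ent0r //; case: (j =P b) => [e|]; last by rewrite andbF.
  by move: (ltn_ord b); rewrite -e ltnNge hj.
by rewrite (entE _ hi hj) mxE.
Qed.

Lemma sum_pick n (F : 'I_n -> C) x (hx : (x < n)%N) :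
  \sum_(a < n) (x == a)%:R * F a = F (Ordinal hx).
Proof.
rewrite (bigD1 (Ordinal hx)) //= eqxx mul1r big1 ?addr0 // => a ha.
case: eqP => [e|]; last by rewrite mul0r.
have ea : a = Ordinal hx by apply: val_inj.
by rewrite ea eqxx in ha.
Qed.

Lemma sum_pick0 n (F : 'I_n -> C) x : (n <= x)%N -> \sum_(a < n) (x == a)%:R * F a = 0.
Proof.
move=> hx; rewrite big1 // => a _; case: eqP => [e|]; last by rewrite mul0r.
by move: (ltn_ord a); rewrite -e ltnNge hx.
Qed.

Lemma pauli_span k (g : 'M[C]_(2 ^ k) -> C) : islin g ->
  (forall t : k.-tuple 'I_4, g (pauli_str R t) = 0) -> forall Y, g Y = 0.
Proof.
elim: k g => [|k IH] g gl gP Y.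
  have -> : Y = ent Y 0 0 *: pauli_str R ([tuple] : 0.-tuple 'I_4).
    apply: ent_inj => i j; rewrite ent_scale ent_pstr /= ent_scalar [X in (i < X)%N]expn0.
    have [hi|hi] := ltnP i 1; last by rewrite ent0l ?expn0 // mulr0.
    have [hj|hj] := ltnP j 1; last by rewrite ent0r ?expn0 // (_ : (i == j) = false) ?mulr0 //; apply/negbTE; rewrite neq_ltn (leq_trans hi hj).
    by move: hi hj; rewrite !ltnS !leqn0 => /eqP -> /eqP ->; rewrite mulr1.
  by rewrite islinZ // gP mulr0.
have h1 : forall x Z, g (Kr (pauli R x) Z) = 0.
  move=> x; apply: (IH (fun Z => g (Kr (pauli R x) Z))).
    by move=> c Y1 Z1; rewrite KrDr gl.
  by move=> t; rewrite -pauli_str_cons gP.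
have h2 : forall E Z, g (Kr E Z) = 0.
  by move=> E Z; rewrite (pauli_decomp E) !KrDl !gl KrZl islinZ // !h1 !mulr0 !addr0.
have K0 : (0 < 2 ^ k)%N by rewrite expn_gt0.
have -> : Y = \sum_(a < 2) \sum_(b < 2) Kr (delta_mx a b)
   (\matrix_(l, m) ent Y (a * 2 ^ k + l) (b * 2 ^ k + m)).
  apply: ent_inj => i j; rewrite ent_sum.
  under eq_bigr => a _.
    rewrite ent_sum; under eq_bigr => b _ do rewrite ent_Kr ent_delta -mulnb natrM -mulrA.
    rewrite -mulr_sumr; over.
  have [hi|hi] := ltnP (i %/ 2 ^ k) 2; last first.
    by rewrite sum_pick0 // ent0l // expnS -leq_divRL.
  rewrite sum_pick.
  have [hj|hj] := ltnP (j %/ 2 ^ k) 2; last first.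
    by rewrite sum_pick0 // ent0r // expnS -leq_divRL.
  rewrite sum_pick (entE _ (ltn_pmod i K0) (ltn_pmod j K0)) mxE /=.
  by rewrite -!divn_eq.
rewrite islin_sum // big1 // => a _; rewrite islin_sum // big1 // => b _.
Qed.


Lemma sum_cast n m (F : nat -> C) : n = m -> \sum_(z < n) F z = \sum_(z < m) F z.
Proof. by move->. Qed.

Lemma pdiv K i l : (l < K)%N -> ((i * K + l) %/ K = i)%N.
Proof. by move=> h; rewrite divnMDl ?(leq_ltn_trans _ h) // divn_small ?addn0. Qed.

Lemma pmod K i l : (l < K)%N -> ((i * K + l) %% K = l)%N.
Proof. by move=> h; rewrite modnMDl modn_small. Qed.

Lemma sum_castG (V : nmodType) n m (e : n = m) (G : 'I_n -> V) :
  \sum_(z < n) G z = \sum_(z < m) G (cast_ord (esym e) z).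
Proof. by subst; apply: eq_bigr => z _; congr G; apply: val_inj. Qed.

Lemma sum_pairG (V : nmodType) p q (G : 'I_(p * q) -> V) :
  \sum_(z < p * q) G z = \sum_(x < p) \sum_(y < q) G (pair_ix x y).
Proof.
rewrite pair_big /=.
have bij : bijective (fun pr : 'I_p * 'I_q => pair_ix pr.1 pr.2).
  exists (fun z => (hi z, lo z)).
    move=> [x y] /=; congr (_, _); apply: val_inj => /=.
      by rewrite pdiv.
    by rewrite pmod.
  by move=> z; apply: val_inj => /=; rewrite -divn_eq.
by rewrite (reindex _ (onW_bij _ bij)).
Qed.

Lemma tr_ent n (A : 'M[C]_n) : \tr A = \sum_(i < n) ent A i i.
Proof. by apply: eq_bigr => i _; rewrite -ent_ord. Qed.

Definition Tm a k (phi : 'M[C]_(2 ^ k)) (X : 'M[C]_(2 ^ (a + k))) : 'M[C]_(2 ^ a) :=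
  ptrace_last (kron_q 1%:M phi *m X).

Lemma entT a k (phi : 'M[C]_(2 ^ k)) (X : 'M[C]_(2 ^ (a + k))) i j : (i < 2 ^ a)%N -> (j < 2 ^ a)%N ->
  ent (Tm phi X) i j = \sum_(l < 2 ^ k) \sum_(m < 2 ^ k)
     ent phi l m * ent X (i * 2 ^ k + m) (j * 2 ^ k + l).
Proof.
move=> hi hj; rewrite /Tm /ptrace_last (entE _ hi hj) mxE; apply: eq_bigr => l _.
rewrite -ent_ord ent_cast /= ent_mul.
rewrite (sum_castG (expnD 2 a k)) sum_pairG /=.
have K0 : (0 < 2 ^ k)%N by rewrite expn_gt0.
under eq_bigr => i' _.
  under eq_bigr => m _ do rewrite ent_cast ent_kron // !pdiv // !pmod // ent_scalar hi /= -mulrA.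
  over.
under eq_bigr => i' _.
  rewrite (_ : (if i == i' then 1 else 0) = (i == i')%:R); last by case: (i == i').
  rewrite -mulr_sumr; over.
by rewrite sum_pick.
Qed.


Lemma lin_form n (W : nat -> nat -> C) :
  islin (fun Y : 'M[C]_n => \sum_(l < n) \sum_(m < n) ent Y l m * W l m).
Proof.
move=> c Y Z; rewrite mulr_sumr -big_split; apply: eq_bigr => l _.
rewrite mulr_sumr -big_split; apply: eq_bigr => m _.
by rewrite ent_add ent_scale mulrDl mulrA.
Qed.

Lemma pdegT a k (phi : 'M[C]_(2 ^ k)) (B : 'M[C]_(2 ^ (a + k))) :
  (pdeg (Tm phi B) <= pdeg B)%N.
Proof.
rewrite /pdeg; apply/bigmax_leqP => s hs.
have [t ht] : exists t : k.-tuple 'I_4, pcoef B (cat_tuple s t) != 0.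
  case: (pselect (exists t : k.-tuple 'I_4, pcoef B (cat_tuple s t) != 0)) => // H.
  exfalso; move: hs; apply/negP; rewrite negbK.
  set P := pauli_str R s.
  pose W := fun l m => \sum_(j < 2 ^ a) \sum_(i < 2 ^ a)
     ent P j i * ent B (i * 2 ^ k + m) (j * 2 ^ k + l).
  pose g := fun Y : 'M[C]_(2 ^ k) => \sum_(l < 2 ^ k) \sum_(m < 2 ^ k) ent Y l m * W l m.
  have K0 : (0 < 2 ^ k)%N by rewrite expn_gt0.
  have e1 : \tr (P *m Tm phi B) = g phi.
    rewrite tr_ent /g /W.
    under eq_bigr => j _.
      rewrite ent_mul.
      under eq_bigr => z _.
        rewrite entT // mulr_sumr.
        under eq_bigr => l _ do rewrite mulr_sumr.
        over.
      over.
    simpl.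
    under eq_bigr => j _ do rewrite exchange_big /=.
    under eq_bigr => j _ do under eq_bigr => l _ do rewrite exchange_big /=.
    rewrite exchange_big /=.
    under eq_bigr => l _ do rewrite exchange_big /=.
    apply: eq_bigr => l _; apply: eq_bigr => m _.
    rewrite mulr_sumr; apply: eq_bigr => j _.
    rewrite mulr_sumr; apply: eq_bigr => i _.
    by rewrite mulrCA.
  have e2 : forall t : k.-tuple 'I_4,
      g (pauli_str R t) = \tr (pauli_str R (cat_tuple s t) *m B).
    move=> t; rewrite tr_ent /g /W.
    rewrite (sum_castG (expnD 2 a k)) sum_pairG /=.
    symmetry.
    under eq_bigr => j _.
      under eq_bigr => l _.
        rewrite ent_mul (sum_castG (expnD 2 a k)) sum_pairG /=.
        under eq_bigr => i _.
          under eq_bigr => m _ do rewrite pauli_str_cat !pdiv // !pmod //.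
          over.
        over.
      over.
    simpl.
    rewrite exchange_big /=.
    under eq_bigr => l _ do under eq_bigr => j _ do rewrite exchange_big /=.
    under eq_bigr => l _ do rewrite exchange_big /=.
    apply: eq_bigr => l _; apply: eq_bigr => m _.
    rewrite mulr_sumr; apply: eq_bigr => j _.
    rewrite mulr_sumr; apply: eq_bigr => i _.
    by rewrite mulrA [ent P _ _ * _]mulrC.
  rewrite /pcoef e1 (@pauli_span k g (lin_form W)) ?mul0r // => t.
  rewrite e2.
  have : pcoef B (cat_tuple s t) = 0.
    by apply/eqP; apply: (contra_notT _ H) => h; exists t.
  rewrite /pcoef => /eqP; rewrite mulf_eq0 invr_eq0 pnatr_eq0 expn_eq0 /= orbF.
  by move/eqP.
have := @leq_bigmax_cond _ (fun x => pcoef B x != 0) (fun x => pweight x) _ ht.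
apply: leq_trans.
by rewrite /pweight /= count_cat leq_addr.
Qed.

Local Open Scope complex_scope.

Lemma normcC (z : C) : (Normc.normc z)%:C = `|z|.
Proof. by case: z => x y; rewrite normc_def. Qed.

Lemma normc_ge0 (z : C) : 0 <= Normc.normc z.
Proof. by rewrite -ler0c normcC normr_ge0. Qed.

Definition ns p (v : 'cV[C]_p) : R := \sum_i Normc.normc (v i 0) ^+ 2.

Lemma ns_ge0 p (v : 'cV[C]_p) : 0 <= ns v.
Proof. by apply: sumr_ge0 => i _; rewrite sqr_ge0. Qed.

Lemma vnorm_ge0 p (v : 'cV[C]_p) : 0 <= vnorm v.
Proof. exact: sqrtr_ge0. Qed.

Lemma vnorm_sq p (v : 'cV[C]_p) : vnorm v ^+ 2 = ns v.
Proof. by rewrite /vnorm sqr_sqrtr // ns_ge0. Qed.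

Lemma vnorm1 p (v : 'cV[C]_p) : vnorm v = 1 -> ns v = 1.
Proof. by move=> h; rewrite -vnorm_sq h expr1n. Qed.

Lemma ns1 p (v : 'cV[C]_p) : ns v = 1 -> vnorm v = 1.
Proof. by move=> h; rewrite /vnorm -/(ns v) h sqrtr1. Qed.

Lemma nsC p (v : 'cV[C]_p) : (ns v)%:C = \sum_i `|v i 0| ^+ 2.
Proof. by rewrite rmorph_sum; apply: eq_bigr => i _; rewrite rmorphXn /= normcC. Qed.

Lemma dotnorm p (v : 'cV[C]_p) : (ctrans v *m v) 0 0 = (ns v)%:C.
Proof. by rewrite nsC mxE; apply: eq_bigr => i _; rewrite !mxE normCKC. Qed.

Lemma cs_unit n (A B : 'I_n -> R) : \sum_i A i ^+ 2 = 1 ->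
  \sum_i A i * B i <= Num.sqrt (\sum_i B i ^+ 2).
Proof.
move=> hA; set s := Num.sqrt _.
have s0 : 0 <= s by exact: sqrtr_ge0.
have ss : s ^+ 2 = \sum_i B i ^+ 2 by rewrite sqr_sqrtr // sumr_ge0 // => i _; rewrite sqr_ge0.
have [e|sP] := eqVneq s 0.
  have B0 : forall i, B i = 0.
    move=> i; apply/eqP; rewrite -sqrf_eq0; apply/eqP.
    apply: (psumr_eq0P (P := predT) (F := fun i => B i ^+ 2)) => //.
      by move=> j _; rewrite sqr_ge0.
    by rewrite -ss e expr2 mulr0.
  by rewrite e big1 // => i _; rewrite B0 mulr0.
have spos : 0 < s by rewrite lt_def sP s0.
have key : \sum_i (2 * s) * (A i * B i) <= \sum_i (s ^+ 2 * A i ^+ 2 + B i ^+ 2).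
  apply: ler_sum => i _; rewrite -subr_ge0.
  have -> : s ^+ 2 * A i ^+ 2 + B i ^+ 2 - 2 * s * (A i * B i) = (s * A i - B i) ^+ 2 by ring.
  exact: sqr_ge0.
rewrite -mulr_sumr big_split /= -mulr_sumr hA -ss in key.
rewrite -(ler_pM2l (_ : 0 < 2 * s)); last by rewrite mulr_gt0.
move: key; rewrite mulr1.
by have -> : s ^+ 2 + s ^+ 2 = 2 * s * s by ring.
Qed.


Definition Bd p q (X : 'M[C]_(p, q)) : R :=
  Num.sqrt (\sum_(i < p) (\sum_(j < q) Normc.normc (X i j)) ^+ 2).

Lemma normc_le1 q (v : 'cV[C]_q) j : vnorm v = 1 -> Normc.normc (v j 0) <= 1.
Proof.
move/vnorm1 => h.
have : Normc.normc (v j 0) ^+ 2 <= 1.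
  rewrite -h /ns (bigD1 j) //= lerDl sumr_ge0 // => i _; exact: sqr_ge0.
have := normc_ge0 (v j 0); nra.
Qed.

Lemma vnorm_bound p q (X : 'M[C]_(p, q)) (v : 'cV[C]_q) : vnorm v = 1 -> vnorm (X *m v) <= Bd X.
Proof.
move=> hv; rewrite /vnorm /Bd ler_sqrt; last by apply: sumr_ge0 => i _; exact: sqr_ge0.
apply: ler_sum => i _.
have h1 : Normc.normc ((X *m v) i 0) <= \sum_j Normc.normc (X i j).
  rewrite -lecR normcC mxE rmorph_sum /=.
  apply: le_trans (ler_norm_sum _ _ _) _; apply: ler_sum => j _.
  rewrite normrM normcC -[X in _ <= X]mulr1; apply: ler_wpM2l; first exact: normr_ge0.
  by rewrite -normcC -(rmorph1 (real_complex R)) lecR; exact: normc_le1.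
have h0 := normc_ge0 ((X *m v) i 0).
nra.
Qed.

Definition specset p q (X : 'M[C]_(p, q)) :=
  [set vnorm (X *m v) | v in [set v : 'cV[C]_q | vnorm v = 1]]%classic.

Lemma spec_has_sup p q (X : 'M[C]_(p, q)) (v : 'cV[C]_q) : vnorm v = 1 -> has_sup (specset X).
Proof.
move=> hv; split; first by exists (vnorm (X *m v)); exists v.
by exists (Bd X) => r [w hw <-]; exact: vnorm_bound.
Qed.

Lemma spec_ub p q (X : 'M[C]_(p, q)) (v : 'cV[C]_q) : vnorm v = 1 -> vnorm (X *m v) <= specnorm X.
Proof. by move=> hv; apply: (sup_upper_bound (spec_has_sup X hv)); exists v. Qed.

Lemma spec_ge0 p q (X : 'M[C]_(p, q)) (v : 'cV[C]_q) : vnorm v = 1 -> 0 <= specnorm X.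
Proof. by move=> hv; apply: le_trans (spec_ub X hv); exact: vnorm_ge0. Qed.

Lemma unit_exists q : (0 < q)%N -> exists v : 'cV[C]_q, vnorm v = 1.
Proof.
move=> hq; exists (delta_mx (Ordinal hq) 0); apply: ns1.
rewrite /ns (bigD1 (Ordinal hq)) //= big1 ?addr0.
  by rewrite mxE !eqxx /= expr1n expr0n addr0 sqrtr1 expr1n.
move=> i hi; rewrite mxE (negbTE hi) /=.
by rewrite expr0n addr0 sqrtr0 expr0n.
Qed.

Lemma dot_le n (X : 'M[C]_n) (x y : 'cV[C]_n) : vnorm x = 1 -> vnorm y = 1 ->
  `|(ctrans x *m X *m y) 0 0| <= (specnorm X)%:C.
Proof.
move=> hx hy; rewrite -mulmxA; set z := X *m y.
apply: (@le_trans _ _ (vnorm z)%:C); last by rewrite lecR spec_ub.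
have h1 := vnorm1 hx; rewrite /ns in h1.
have := @cs_unit _ (fun i => Normc.normc (x i 0)) (fun i => Normc.normc (z i 0)) h1.
rewrite -/(vnorm z) -lecR => h; apply: le_trans h.
rewrite mxE rmorph_sum; apply: le_trans (ler_norm_sum _ _ _) _.
apply: ler_sum => i _; rewrite rmorphM /= !normcC normrM !mxE norm_conjC.
by [].
Qed.


Lemma ctransK p q (A : 'M[C]_(p, q)) : ctrans (ctrans A) = A.
Proof. by apply/matrixP => i j; rewrite !mxE conjCK. Qed.

Lemma ent_ctr p q (A : 'M[C]_(p, q)) i j : ent (ctrans A) i j = Num.conj (ent A j i).
Proof.
have [hi|hi] := ltnP i q; last by rewrite ent0l // ent0r // conjC0.
have [hj|hj] := ltnP j p; last by rewrite ent0r // ent0l // conjC0.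
by rewrite (entE _ hi hj) (entE _ hj hi) !mxE.
Qed.

Lemma ctrans_tc n (A : 'M[C]_n) : ctrans A = map_mx Num.conj (A^T).
Proof. by rewrite /ctrans map_trmx. Qed.

Section Spec.
Variable k : nat.
Variable phi : 'M[C]_(2 ^ k).
Hypothesis dphi : density phi.
Let P := spectralmx phi.
Let dd := spectral_diag phi.

Lemma phi_normal : phi \is normalmx.
Proof.
case: dphi => [[herm _] _]; apply/normalmxP.
by rewrite -ctrans_tc herm.
Qed.

Lemma P_unit1 : P *m ctrans P = 1%:M.
Proof. by rewrite ctrans_tc; apply/unitarymxP; exact: spectral_unitarymx. Qed.

Lemma P_unit2 : ctrans P *m P = 1%:M.
Proof.
rewrite ctrans_tc -invmx_unitary; last exact: spectral_unitarymx.
by rewrite mulVmx // spectral_unit.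
Qed.

Lemma phi_decomp : phi = ctrans P *m diag_mx dd *m P.
Proof.
rewrite ctrans_tc -invmx_unitary; last exact: spectral_unitarymx.
exact/orthomx_spectralP/phi_normal.
Qed.

Lemma diag_eq : P *m phi *m ctrans P = diag_mx dd.
Proof.
rewrite {1}phi_decomp !mulmxA P_unit1 mul1mx -mulmxA P_unit1 mulmx1.
by [].
Qed.

Lemma dd_ge0 r : 0 <= dd 0 r.
Proof.
have -> : dd 0 r = (P *m phi *m ctrans P) r r by rewrite diag_eq mxE eqxx mulr1n.
case: dphi => [[_ psdP] _].
have := psdP (ctrans (row r P)); rewrite ctransK.
suff -> : (row r P *m phi *m ctrans (row r P)) 0 0 = (P *m phi *m ctrans P) r r by [].
rewrite !mxE; apply: eq_bigr => z _; rewrite !mxE; congr (_ * _).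
by apply: eq_bigr => y _; rewrite !mxE.
Qed.

Lemma dd_sum : \sum_r dd 0 r = 1.
Proof.
case: dphi => _ <-.
rewrite -mxtrace_diag -diag_eq mxtrace_mulC mulmxA P_unit2 mul1mx.
by [].
Qed.

Lemma phi_ent l m : ent phi l m =
  \sum_(r < 2 ^ k) Num.conj (ent P r l) * dd 0 r * ent P r m.
Proof.
have [hl|hl] := ltnP l (2 ^ k); last by rewrite ent0l // big1 // => r _; rewrite (@ent0r _ _ P r l) // conjC0 !mul0r.
have [hm|hm] := ltnP m (2 ^ k); last by rewrite ent0r // big1 // => r _; rewrite (@ent0r _ _ P r m) // mulr0.
rewrite {1}phi_decomp (entE _ hl hm) mxE; apply: eq_bigr => r _.
rewrite mul_mx_diag !mxE (entE P (ltn_ord r) hl) (entE P (ltn_ord r) hm).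
by congr (Num.conj (P _ _) * _ * P _ _); apply: val_inj.
Qed.

End Spec.


Definition Qf a k (X : 'M[C]_(2 ^ (a + k))) (u v : 'cV[C]_(2 ^ a)) l m :=
  \sum_(j < 2 ^ a) \sum_(i < 2 ^ a)
     Num.conj (ent u i 0) * ent X (i * 2 ^ k + m) (j * 2 ^ k + l) * ent v j 0.

Lemma I1 a k (phi : 'M[C]_(2 ^ k)) (X : 'M[C]_(2 ^ (a + k))) (u v : 'cV[C]_(2 ^ a)) :
  ent (ctrans u *m Tm phi X *m v) 0 0 =
  \sum_(l < 2 ^ k) \sum_(m < 2 ^ k) ent phi l m * Qf X u v l m.
Proof.
rewrite ent_mul.
under eq_bigr => j _.
  rewrite ent_mul mulr_suml.
  under eq_bigr => i _.
    rewrite ent_ctr entT // mulr_sumr mulr_suml.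
    under eq_bigr => l _ do rewrite mulr_sumr mulr_suml.
    over.
  over.
simpl.
under eq_bigr => j _ do rewrite exchange_big /=.
under eq_bigr => j _ do under eq_bigr => l _ do rewrite exchange_big /=.
rewrite exchange_big /=.
under eq_bigr => l _ do rewrite exchange_big /=.
apply: eq_bigr => l _; apply: eq_bigr => m _.
rewrite /Qf mulr_sumr; apply: eq_bigr => j _.
rewrite mulr_sumr; apply: eq_bigr => i _.
by ring.
Qed.

Definition kc a k (u : 'cV[C]_(2 ^ a)) (p : 'cV[C]_(2 ^ k)) : 'cV[C]_(2 ^ (a + k)) :=
  castmx (esym (expnD 2 a k), muln1 1) (kron u p).

Lemma ent_kc a k (u : 'cV[C]_(2 ^ a)) (p : 'cV[C]_(2 ^ k)) z :
  ent (kc u p) z 0 = ent u (z %/ 2 ^ k) 0 * ent p (z %% 2 ^ k) 0.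
Proof. by rewrite ent_cast ent_kron ?expn_gt0 // div0n mod0n. Qed.

Lemma I3 a k (X : 'M[C]_(2 ^ (a + k))) (u v : 'cV[C]_(2 ^ a)) (p q : 'cV[C]_(2 ^ k)) :
  ent (ctrans (kc u p) *m X *m kc v q) 0 0 =
  \sum_(l < 2 ^ k) \sum_(m < 2 ^ k) Num.conj (ent p m 0) * ent q l 0 * Qf X u v l m.
Proof.
have K0 : (0 < 2 ^ k)%N by rewrite expn_gt0.
rewrite ent_mul (sum_castG (expnD 2 a k)) sum_pairG /=.
under eq_bigr => j _.
  under eq_bigr => l _.
    rewrite ent_mul (sum_castG (expnD 2 a k)) sum_pairG /= mulr_suml.
    under eq_bigr => i _.
      rewrite mulr_suml.
      under eq_bigr => m _ do rewrite ent_ctr !ent_kc !pdiv // !pmod //.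
      over.
    over.
  over.
simpl.
rewrite exchange_big /=.
under eq_bigr => l _ do under eq_bigr => j _ do rewrite exchange_big /=.
under eq_bigr => l _ do rewrite exchange_big /=.
apply: eq_bigr => l _; apply: eq_bigr => m _.
rewrite /Qf mulr_sumr; apply: eq_bigr => j _.
rewrite mulr_sumr; apply: eq_bigr => i _.
rewrite rmorphM /=; by ring.
Qed.

Lemma ns_ent p (v : 'cV[C]_p) : ns v = \sum_(i < p) Normc.normc (ent v i 0) ^+ 2.
Proof. by apply: eq_bigr => i _; rewrite -ent_ord. Qed.

Lemma kc_unit a k (u : 'cV[C]_(2 ^ a)) (p : 'cV[C]_(2 ^ k)) :
  vnorm u = 1 -> vnorm p = 1 -> vnorm (kc u p) = 1.
Proof.
move=> /vnorm1 hu /vnorm1 hp; apply: ns1.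
have K0 : (0 < 2 ^ k)%N by rewrite expn_gt0.
rewrite ns_ent (sum_castG (expnD 2 a k)) sum_pairG /=.
rewrite ns_ent in hu; rewrite ns_ent in hp.
rewrite -hu; apply: eq_bigr => i _.
rewrite -[X in _ = X]mulr1 -hp mulr_sumr; apply: eq_bigr => m _.
by rewrite ent_kc pdiv // pmod // Normc.normcM exprMn.
Qed.


Lemma ent_w n (P : 'M[C]_n) (r : 'I_n) m :
  ent (\col_(m0 < n) Num.conj (P r m0)) m 0 = Num.conj (ent P r m).
Proof.
have [hm|hm] := ltnP m n; last by rewrite ent0l // (@ent0r _ _ P r m) // conjC0.
by rewrite (entE _ hm (ltn0Sn 0)) (entE P (ltn_ord r) hm) !mxE; congr (Num.conj (P _ _)); apply: val_inj.
Qed.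

Lemma w_unit n (P : 'M[C]_n) (r : 'I_n) : P *m ctrans P = 1%:M ->
  vnorm (\col_(m0 < n) Num.conj (P r m0)) = 1.
Proof.
move=> hP; apply: ns1; apply: (@complexI R); rewrite nsC rmorph1 /=.
have := congr1 (fun M : 'M[C]_n => M r r) hP; rewrite /= !mxE eqxx mulr1n => <-.
apply: eq_bigr => m _; rewrite !mxE norm_conjC normCK.
by [].
Qed.

Lemma key a k (phi : 'M[C]_(2 ^ k)) (X : 'M[C]_(2 ^ (a + k))) (u v : 'cV[C]_(2 ^ a)) :
  density phi -> vnorm u = 1 -> vnorm v = 1 ->
  `|ent (ctrans u *m Tm phi X *m v) 0 0| <= (specnorm X)%:C.
Proof.
move=> dphi hu hv; rewrite I1.
set P := spectralmx phi; set dd := spectral_diag phi.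
pose w (r : 'I_(2 ^ k)) : 'cV[C]_(2 ^ k) := \col_m Num.conj (P r m).
have hw : forall r, vnorm (w r) = 1 by move=> r; apply: w_unit; exact: P_unit1.
have -> : \sum_(l < 2 ^ k) \sum_(m < 2 ^ k) ent phi l m * Qf X u v l m =
    \sum_r dd 0 r * ent (ctrans (kc u (w r)) *m X *m kc v (w r)) 0 0.
  under eq_bigr => l _ do under eq_bigr => m _ do rewrite (phi_ent dphi) mulr_suml.
  under eq_bigr => l _ do rewrite exchange_big /=.
  rewrite exchange_big /=; apply: eq_bigr => r _.
  rewrite I3 mulr_sumr; apply: eq_bigr => l _.
  rewrite mulr_sumr; apply: eq_bigr => m _.
  rewrite !ent_w conjCK -/P -/dd; by ring.
apply: le_trans (ler_norm_sum _ _ _) _.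
apply: (@le_trans _ _ (\sum_r dd 0 r * (specnorm X)%:C)).
  apply: ler_sum => r _; rewrite normrM ger0_norm; last exact: dd_ge0.
  apply: ler_wpM2l; first exact: dd_ge0.
  rewrite (ent_ord _ 0 0).
  exact: dot_le (kc_unit hu (hw r)) (kc_unit hv (hw r)).
by rewrite -mulr_suml dd_sum // mul1r.
Qed.


Lemma conj_realc (x : R) : Num.conj (x%:C) = x%:C.
Proof. by apply: conj_Creal; apply/complex_realP; exists x. Qed.

Lemma normc_real (x : R) : Normc.normc (x%:C) = `|x|.
Proof. by rewrite /= expr0n addr0 sqrtr_sqr. Qed.

Lemma specT a k (phi : 'M[C]_(2 ^ k)) (X : 'M[C]_(2 ^ (a + k))) :
  density phi -> specnorm (Tm phi X) <= specnorm X.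
Proof.
move=> dphi.
have [v0 hv0] : exists v : 'cV[C]_(2 ^ (a + k)), vnorm v = 1.
  by apply: unit_exists; rewrite expn_gt0.
have [va hva] : exists v : 'cV[C]_(2 ^ a), vnorm v = 1.
  by apply: unit_exists; rewrite expn_gt0.
apply: ge_sup; first by exists (vnorm (Tm phi X *m va)); exists va.
move=> r [v hv <-].
set y := Tm phi X *m v.
have [y0|ynz] := eqVneq (vnorm y) 0; first by rewrite y0; exact: spec_ge0 hv0.
set s := vnorm y.
have sP : 0 < s by rewrite lt_def ynz vnorm_ge0.
pose u := (s^-1)%:C *: y.
have hu : vnorm u = 1.
  apply: ns1; rewrite /ns.
  under eq_bigr => i _ do rewrite mxE Normc.normcM exprMn.
  rewrite -mulr_sumr -/(ns y) -vnorm_sq -/s.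
  by rewrite normc_real ger0_norm ?invr_ge0 ?ltW // -exprMn mulVf ?expr1n.
have := key X dphi hu hv; rewrite -mulmxA -/y.
rewrite /u; clearbody y; rewrite -/s.
have -> : ent (ctrans ((s^-1)%:C *: y) *m y) 0 0 = s%:C.
  rewrite (ent_ord _ 0 0) mxE.
  under eq_bigr => i _ do rewrite !mxE rmorphM /= conj_realc -mulrA.
  rewrite -mulr_sumr.
  have -> : \sum_i Num.conj (y i 0) * y i 0 = (ns y)%:C.
    by rewrite -dotnorm mxE; apply: eq_bigr => i _; rewrite !mxE.
  rewrite -vnorm_sq -/s -rmorphM /=; congr (_%:C).
  by rewrite expr2 mulrA mulVf ?mul1r // gt_eqF.
move=> h; rewrite -lecR; apply: le_trans h.
by rewrite ger0_norm // ler0c ltW.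
Qed.

Lemma Tm_sub a k (phi : 'M[C]_(2 ^ k)) (X Y : 'M[C]_(2 ^ (a + k))) :
  Tm phi X - Tm phi Y = Tm phi (X - Y).
Proof.
apply/matrixP => i j; rewrite -!ent_ord ent_add ent_opp !entT //.
rewrite -sumrB; apply: eq_bigr => l _; rewrite -sumrB; apply: eq_bigr => m _.
by rewrite ent_add ent_opp mulrDr mulrN.
Qed.

Lemma specnorm0 m (eps : R) : 0 <= eps -> specnorm (0 : 'M[C]_(2 ^ m)) <= eps.
Proof.
move=> he; have [v hv] : exists v : 'cV[C]_(2 ^ m), vnorm v = 1.
  by apply: unit_exists; rewrite expn_gt0.
apply: le_trans he; apply: ge_sup; first by exists (vnorm ((0 : 'M[C]_(2 ^ m)) *m v)); exists v.
move=> r [w _ <-]; rewrite mul0mx /vnorm big1 ?sqrtr0 // => i _.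
by rewrite mxE /= expr0n addr0 sqrtr0 expr0n.
Qed.

Lemma feas m (A : 'M[C]_(2 ^ m)) (eps : R) d :
  deg_feasible A eps d -> (approx_deg A eps <= d)%N.
Proof.
move=> hd; rewrite /approx_deg; case: pselect => [h|[]]; last by exists d.
by case: ex_minnP => m0 _ /(_ d hd).
Qed.

End Work.

Unset Implicit Arguments.
(* n = a + k qubits; phi acts on the last k qubits *)
Theorem lemma2p12 (R : realType) (a k : nat)
  (M : 'M[R[i]]_(2 ^ (a + k))) (phi : 'M[R[i]]_(2 ^ k)) (eps : R) :
  is_hermitian M -> density phi -> 0 <= eps <= 1 ->
  (approx_deg (ptrace_last (kron_q 1%:M phi *m M)) eps <= approx_deg M eps)%N.
Proof.
move=> _ dphi /andP[he0 _].
have hM0 : exists d, deg_feasible M eps d.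
  exists (pdeg M); apply/asboolP; exists M; split => //.
  by rewrite subrr; exact: specnorm0.
rewrite {2}/approx_deg; case: pselect => [h|[]] //.
case: ex_minnP => d /asboolP [B [hB hMB]] _.
apply: (leq_trans (feas (d := pdeg (Tm phi B)) _)); last by rewrite -hB; exact: pdegT.
apply/asboolP; exists (Tm phi B); split => //.
rewrite -[ptrace_last _]/(Tm phi M) Tm_sub.
exact: le_trans (specT _ dphi) hMB.
Qed.
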